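(* Let $k_1,k_2,k_3\ge1$, let $G$ be the grid graph on $\{0,\dots,k_1\}\times\{0,\dots,k_2\}\times\{0,\dots,k_3\}$ (adjacency: differing by $1$ in exactly one coordinate), let $\mathcal B=\{B_1,\dots,B_m\}$ with $B_i=[a_i',a_i'']\times[b_i',b_i'']\times[c_i',c_i'']\subseteq\mathbb R^3$ boxes with integer endpoints $0\le a_i'<a_i''\le k_1$, $0\le b_i'<b_i''\le k_2$, $0\le c_i'<c_i''\le k_3$, and let $G_i$ be the subgraph of $G$ induced by the vertices in $B_i$. Let $\widetilde G$ be the graph with vertex set $V(G)\cup\{(u,i):1\le i\le m,\ u\in V(G_i)\}$ and edges: all edges of $G$; the edges $(u,i)(w,i)$ for $uw$ an edge of $G_i$; and the edges $u\,(u,i)$ for $u\in V(G_i)$. Let $\alpha=(0,0,0)$. Then $\chi(\Gamma(\widetilde G))\ge\chi(\Gamma_\alpha(\widetilde G))\ge\chi(\mathcal B)$.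
   Context: $\widetilde G$ is a median graph; $d$ is its graph distance. The Djoković–Winkler relation $\Theta$: $xy\,\Theta\,zw$ iff $d(x,z)+d(y,w)\ne d(x,w)+d(y,z)$, an equivalence relation on edges of a median graph. Two $\Theta$-classes cross if some 4-cycle has two opposite edges in one class and the other two in the other; they osculate if some edges $e$, $e'$, one from each class, share an endpoint and lie in no common 4-cycle. The contact graph $\Gamma(\widetilde G)$ has the $\Theta$-classes as vertices, distinct classes adjacent iff they cross or osculate. With edges directed from $x$ to $y$ iff $d(x,\alpha)<d(y,\alpha)$ (tail = origin), the pointed contact graph $\Gamma_\alpha(\widetilde G)$ has the same vertices, distinct classes adjacent iff they cross or osculate via two edges with a common origin. $\chi$ denotes chromatic number; $\chi(\mathcal B)$ is the chromatic number of the intersection graph of the boxes of $\mathcal B$ (boxes adjacent iff they intersect as subsets of $\mathbb R^3$). *)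

(* Defs.v *)
From Stdlib Require Import Reals ClassicalEpsilon.
From mathcomp Require Import all_boot all_order.
Set Implicit Arguments. Unset Strict Implicit. Unset Printing Implicit Defensive.

Section Generic.
Variable T : finType.
Variable adj : rel T.

Fixpoint reach (n : nat) (x y : T) : bool :=
  if n is n'.+1 then reach n' x y || [exists z, adj x z && reach n' z y]
  else x == y.

(* graph distance: least n with a walk of length <= n (walks of length
   >= #|T| are never needed; value #|T|.+1 only for disconnected pairs) *)
Definition dist (x y : T) : nat := find (fun n => reach n x y) (iota 0 #|T|.+1).

(* (ordered) edges; each undirected edge appears in both orientations *)
Definition edges : {set T * T} := [set p | adj p.1 p.2].

Definition theta (e f : T * T) : bool :=
  dist e.1 f.1 + dist e.2 f.2 != dist e.1 f.2 + dist e.2 f.1.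

Definition theta_class (e : T * T) : {set T * T} := [set f in edges | theta e f].

Definition theta_classes : {set {set T * T}} := theta_class @: edges.

Definition cycle4 (v0 v1 v2 v3 : T) : bool :=
  [&& uniq [:: v0; v1; v2; v3], adj v0 v1, adj v1 v2, adj v2 v3 & adj v3 v0].

Definition same_edge (e : T * T) (a b : T) : bool :=
  ((e.1 == a) && (e.2 == b)) || ((e.1 == b) && (e.2 == a)).

Definition edge_on_cycle4 (e : T * T) (v0 v1 v2 v3 : T) : bool :=
  [|| same_edge e v0 v1, same_edge e v1 v2, same_edge e v2 v3 | same_edge e v3 v0].

Definition common_cycle4 (e f : T * T) : bool :=
  [exists v0, exists v1, exists v2, exists v3,
     [&& cycle4 v0 v1 v2 v3, edge_on_cycle4 e v0 v1 v2 v3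
       & edge_on_cycle4 f v0 v1 v2 v3]].

Definition cross (C1 C2 : {set T * T}) : bool :=
  [exists v0, exists v1, exists v2, exists v3,
     [&& cycle4 v0 v1 v2 v3, (v0, v1) \in C1, (v2, v3) \in C1,
         (v1, v2) \in C2 & (v3, v0) \in C2]].

Definition osculate (C1 C2 : {set T * T}) : bool :=
  [exists x, exists y, exists z,
     [&& (x, y) \in C1, (x, z) \in C2 & ~~ common_cycle4 (x, y) (x, z)]].

(* same, but the two edges have a common origin x w.r.t. the base point alpha:
   x y is directed from x to y iff d(x,alpha) < d(y,alpha) *)
Definition osculate_at (alpha : T) (C1 C2 : {set T * T}) : bool :=
  [exists x, exists y, exists z,
     [&& (x, y) \in C1, (x, z) \in C2, ~~ common_cycle4 (x, y) (x, z),
         dist x alpha < dist y alpha & dist x alpha < dist z alpha]].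

Definition contact_adj : rel {set T * T} :=
  fun C1 C2 => cross C1 C2 || osculate C1 C2.

Definition pcontact_adj (alpha : T) : rel {set T * T} :=
  fun C1 C2 => cross C1 C2 || osculate_at alpha C1 C2.

End Generic.

Definition colorable (U : finType) (V : {set U}) (adj : rel U) (k : nat) : bool :=
  [exists f : {ffun U -> 'I_(#|U|.+1)},
     [forall x in V, f x < k] &&
     [forall x in V, forall y in V, (x != y) && adj x y ==> (f x != f y)]].

Lemma colorable_ex (U : finType) (V : {set U}) (adj : rel U) :
  exists k, colorable V adj k.
Proof.
exists #|U|.+1; apply/existsP; exists [ffun x => inord (enum_rank x)].
apply/andP; split.
  by apply/forallP => x; apply/implyP => _; exact: ltn_ord.
apply/forallP => x; apply/implyP => _; apply/forallP => y; apply/implyP => _.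
apply/implyP => /andP[xy _]; rewrite !ffunE.
apply: contra xy => /eqP /(congr1 val) /=.
rewrite !inordK; try exact: leqW (ltn_ord _).
by move/val_inj/enum_rank_inj => ->.
Qed.

Definition chi (U : finType) (V : {set U}) (adj : rel U) : nat :=
  ex_minn (colorable_ex V adj).

Definition gpoint (k1 k2 k3 : nat) : finType :=
  ('I_k1.+1 * 'I_k2.+1 * 'I_k3.+1)%type.

Definition diff1 (a b : nat) : bool := (a == b.+1) || (b == a.+1).

Definition grid_adj (k1 k2 k3 : nat) : rel (gpoint k1 k2 k3) :=
  fun u w =>
    [|| diff1 u.1.1 w.1.1 && (u.1.2 == w.1.2) && (u.2 == w.2),
        (u.1.1 == w.1.1) && diff1 u.1.2 w.1.2 && (u.2 == w.2) |
        (u.1.1 == w.1.1) && (u.1.2 == w.1.2) && diff1 u.2 w.2].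

Definition in_box (k1 k2 k3 m : nat) (a1 a2 b1 b2 c1 c2 : 'I_m -> nat)
  (i : 'I_m) (u : gpoint k1 k2 k3) : bool :=
  [&& a1 i <= u.1.1 <= a2 i, b1 i <= u.1.2 <= b2 i & c1 i <= u.2 <= c2 i].

(* vertices of G~ : (None, u) is u in V(G); (Some i, u) is (u,i), u in V(G_i).
   Pairs (Some i, u) with u outside B_i are not vertices (isolated, invalid). *)
Definition tvert (k1 k2 k3 m : nat) : finType :=
  (option 'I_m * gpoint k1 k2 k3)%type.

Definition tvalid (k1 k2 k3 m : nat) (a1 a2 b1 b2 c1 c2 : 'I_m -> nat)
  (v : tvert k1 k2 k3 m) : bool :=
  if v.1 is Some i then in_box a1 a2 b1 b2 c1 c2 i v.2 else true.

Definition tadj (k1 k2 k3 m : nat) (a1 a2 b1 b2 c1 c2 : 'I_m -> nat)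
  : rel (tvert k1 k2 k3 m) :=
  fun v w =>
    [&& tvalid a1 a2 b1 b2 c1 c2 v, tvalid a1 a2 b1 b2 c1 c2 w &
      ((v.1 == w.1) && grid_adj v.2 w.2)
      || ((v.2 == w.2) && (((v.1 == None) && (w.1 != None))
                           || ((v.1 != None) && (w.1 == None))))].

Definition talpha (k1 k2 k3 m : nat) : tvert k1 k2 k3 m := (None, (ord0, ord0, ord0)).

Definition boxes_meet (m : nat) (a1 a2 b1 b2 c1 c2 : 'I_m -> nat) (i j : 'I_m) : Prop :=
  exists x y z : R,
    (Rle (INR (a1 i)) x /\ Rle x (INR (a2 i))) /\ (Rle (INR (a1 j)) x /\ Rle x (INR (a2 j))) /\
    (Rle (INR (b1 i)) y /\ Rle y (INR (b2 i))) /\ (Rle (INR (b1 j)) y /\ Rle y (INR (b2 j))) /\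
    (Rle (INR (c1 i)) z /\ Rle z (INR (c2 i))) /\ (Rle (INR (c1 j)) z /\ Rle z (INR (c2 j))).

Definition box_adj (m : nat) (a1 a2 b1 b2 c1 c2 : 'I_m -> nat) : rel 'I_m :=
  fun i j => if excluded_middle_informative (boxes_meet a1 a2 b1 b2 c1 c2 i j)
             then true else false.

(* Main.v *)
Require Import Defs.
From Stdlib Require Import Reals ClassicalEpsilon.
From mathcomp Require Import all_boot all_order.
From mathcomp Require Import zify.
Set Implicit Arguments. Unset Strict Implicit. Unset Printing Implicit Defensive.

Section Gen.
Variables (T : finType) (adj : rel T).

Lemma reach_mono n x y : reach adj n x y -> reach adj n.+1 x y.
Proof. by move=> h /=; rewrite h. Qed.

Lemma reach_le n n' x y : n <= n' -> reach adj n x y -> reach adj n' x y.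
Proof.
move=> /subnK <-; elim: (n' - n) => //= d IH h; rewrite ?addSn /= IH //.
Qed.

Lemma reach_step n x z y : adj x z -> reach adj n z y -> reach adj n.+1 x y.
Proof. by move=> h1 h2 /=; apply/orP; right; apply/existsP; exists z; rewrite h1 h2. Qed.

Lemma reach_trans m n x y z :
  reach adj m x y -> reach adj n y z -> reach adj (m + n) x z.
Proof.
elim: m x => [|m IH] x /=; first by move/eqP->.
case/orP=> [h1 h2|/existsP[w /andP[h1 h2]] h3].
  by rewrite ?addSn; apply: reach_mono; apply: IH h1 h2.
by rewrite ?addSn; apply: (reach_step h1); apply: IH h2 h3.
Qed.

Lemma reach1 x y : adj x y -> reach adj 1 x y.
Proof. by move=> h; apply: (reach_step h) => /=. Qed.

Hypothesis adj_sym : forall x y, adj x y = adj y x.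

Lemma reach_sym n x y : reach adj n x y -> reach adj n y x.
Proof.
elim: n x y => [|n IH] x y /=; first by rewrite eq_sym.
case/orP=> [h|/existsP[w /andP[h1 h2]]]; first by apply: reach_mono; apply: IH.
have := reach_trans (IH _ _ h2) (reach1 (_ : adj w x)); rewrite addn1; apply; by rewrite adj_sym.
Qed.

Lemma dist_sym x y : Defs.dist adj x y = Defs.dist adj y x.
Proof.
rewrite /Defs.dist; apply: eq_find => n; apply/idP/idP; exact: reach_sym.
Qed.

End Gen.

Lemma reach_pot (T : finType) (adj : rel T) (phi : T -> nat) :
  (forall x y, adj x y -> phi y <= phi x + 1) ->
  forall n x y, reach adj n x y -> phi y <= phi x + n.
Proof.
move=> H; elim=> [|n IH] x y /=; first by move/eqP->; rewrite addn0.
case/orP=> [h|/existsP[w /andP[h1 h2]]]; first by have := IH _ _ h; lia.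
have := IH _ _ h2; have := H _ _ h1; lia.
Qed.

Lemma find_iota_eq (P : pred nat) s N n :
  n < N -> P (s + n) -> (forall k, k < n -> ~~ P (s + k)) -> find P (iota s N) = n.
Proof.
elim: n s N => [|n IH] s [|N] //=.
  by rewrite addn0 => _ ->.
move=> hn hP hk; have := hk 0 isT; rewrite addn0 => /negbTE ->.
congr S; apply: IH => //; first by rewrite addSnnS.
by move=> k hk'; rewrite addSnnS; apply: hk.
Qed.

Lemma dist_exact (T : finType) (adj : rel T) n x y :
  reach adj n x y -> n <= #|T| -> (forall k, reach adj k x y -> n <= k) ->
  Defs.dist adj x y = n.
Proof.
move=> hr hn hm; rewrite /Defs.dist; apply: find_iota_eq; rewrite ?add0n //.
by move=> k hk; apply/negP => /hm; rewrite leqNgt hk.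
Qed.

Lemma colorable_mono (U : finType) (V : {set U}) (adj adj' : rel U) k :
  (forall x y, adj' x y -> adj x y) -> colorable V adj k -> colorable V adj' k.
Proof.
move=> H /existsP[f /andP[h1 h2]]; apply/existsP; exists f; rewrite h1 /=.
apply/forallP=> x; apply/implyP=> hx; apply/forallP=> y; apply/implyP=> hy.
apply/implyP=> /andP[nxy a]; move/forallP: h2 => /(_ x); rewrite hx /=.
by move/forallP => /(_ y); rewrite hy nxy (H _ _ a).
Qed.

Lemma colorable_big (U : finType) (V : {set U}) (adj : rel U) k k' :
  colorable V adj k -> #|U|.+1 <= k' -> colorable V adj k'.
Proof.
move=> /existsP[f /andP[h1 h2]] hk; apply/existsP; exists f; rewrite h2 andbT.
by apply/forallP=> x; apply/implyP=> _; apply: leq_trans hk.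
Qed.

Lemma chi_le (U : finType) (V : {set U}) (adj : rel U) k :
  colorable V adj k -> chi V adj <= k.
Proof. by rewrite /chi; case: ex_minnP => n _ h; apply: h. Qed.

Lemma chi_col (U : finType) (V : {set U}) (adj : rel U) : colorable V adj (chi V adj).
Proof. by rewrite /chi; case: ex_minnP. Qed.

Lemma cc4 (T : finType) (adj : rel T) (x y z : T) : y != z ->
  common_cycle4 adj (x, y) (x, z) ->
  exists w, [&& w != x, adj y w || adj w y & adj z w || adj w z].
Proof.
move=> yz /existsP[v0 /existsP[v1 /existsP[v2 /existsP[v3 /and3P[c e1 e2]]]]].
case/and5P: c => U h01 h12 h23 h30.
move: e1 e2; rewrite /edge_on_cycle4 /same_edge /=.
case/or4P=> /orP[]/andP[]/eqP E1 /eqP E2; case/or4P=> /orP[]/andP[]/eqP E3 /eqP E4;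
  subst;
  try (by move: U; rewrite /= !inE ?eqxx ?orbT ?andbF);
  try (by rewrite eqxx in yz);
  match goal with v : _ |- _ =>
    solve [exists v; rewrite ?h01 ?h12 ?h23 ?h30 ?orbT ?andbT /=;
           apply/eqP => E; rewrite E in U; move: U; rewrite /= !inE ?eqxx /= ?orbT /= ?andbF //] end.
Qed.

Section Spec.
Variables (k1 k2 k3 m : nat) (a1 a2 b1 b2 c1 c2 : 'I_m -> nat).
Hypotheses (ha : forall i, a1 i < a2 i <= k1) (hb : forall i, b1 i < b2 i <= k2)
  (hc : forall i, c1 i < c2 i <= k3).

Local Notation P := (gpoint k1 k2 k3).
Local Notation V := (tvert k1 k2 k3 m).
Local Notation A := (@tadj k1 k2 k3 m a1 a2 b1 b2 c1 c2).
Local Notation valid := (@tvalid k1 k2 k3 m a1 a2 b1 b2 c1 c2).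
Local Notation inb := (@in_box k1 k2 k3 m a1 a2 b1 b2 c1 c2).

Definition absd (a b : nat) := (a - b) + (b - a).
Definition L1 (p u : P) := absd p.1.1 u.1.1 + absd p.1.2 u.1.2 + absd p.2 u.2.
Definition le3 (p u : P) := [&& p.1.1 <= u.1.1, p.1.2 <= u.1.2 & p.2 <= u.2].

Lemma L1_refl p : L1 p p = 0.
Proof. by rewrite /L1 /absd !subnn. Qed.

Lemma le3_refl p : le3 p p.
Proof. by rewrite /le3 !leqnn. Qed.

Lemma grid_sym (u w : P) : grid_adj u w = grid_adj w u.
Proof.
have ds a b : diff1 a b = diff1 b a by rewrite /diff1 orbC.
case: u w => [[u1 u2] u3] [[w1 w2] w3]; rewrite /grid_adj /=.
by rewrite (ds u1) (ds u2) (ds u3) (eq_sym u1) (eq_sym u2) (eq_sym u3).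
Qed.

Lemma A_sym v w : A v w = A w v.
Proof.
rewrite /tadj andbCA; congr (_ && (_ && _)).
case: v w => [o u] [o' w] /=.
rewrite grid_sym (eq_sym o) (eq_sym u).
by case: (o == None); case: (o' == None).
Qed.

Lemma grid_L1 p u w : grid_adj u w -> L1 p w <= L1 p u + 1.
Proof.
case: u w => [[u1 u2] u3] [[w1 w2] w3]; rewrite /grid_adj /diff1 /L1 /absd /=.
case/or3P=> /andP[/andP[h1 h2] h3].
- move/eqP: h2 => <-; move/eqP: h3 => <-; case/orP: h1 => /eqP; lia.
- move/eqP: h1 => <-; move/eqP: h3 => <-; case/orP: h2 => /eqP; lia.
- move/eqP: h1 => <-; move/eqP: h2 => <-; case/orP: h3 => /eqP; lia.
Qed.

Lemma pot_lip p (g : option 'I_m -> nat) :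
  (forall s, g None <= g (Some s) + 1 /\ g (Some s) <= g None + 1) ->
  forall v w, A v w -> L1 p w.2 + g w.1 <= L1 p v.2 + g v.1 + 1.
Proof.
move=> hg [o u] [o' w]; rewrite /tadj /= => /and3P[_ _ /orP[/andP[/eqP<- h]|]].
  by have := grid_L1 p h; lia.
case/andP=> /eqP<-; case: o o' => [s|] [s'|] //= _.
  by have := hg s; lia.
by have := hg s'; lia.
Qed.


Lemma step_adj o x w : valid (o, x) -> valid (o, w) -> grid_adj x w -> A (o, x) (o, w).
Proof. by rewrite /tadj => -> -> /= ->; rewrite eqxx. Qed.

Lemma vert_adj i u : inb i u -> A (None, u) (Some i, u).
Proof. by move=> h; rewrite /tadj /= eqxx /tvalid /= h. Qed.

Lemma box_conv i p u x : inb i p -> inb i u -> le3 p x -> le3 x u -> inb i x.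
Proof.
rewrite /in_box /le3 => /and3P[/andP[? ?] /andP[? ?] /andP[? ?]].
move=> /and3P[/andP[? ?] /andP[? ?] /andP[? ?]] /and3P[? ? ?] /and3P[? ? ?].
apply/and3P; split; apply/andP; split; lia.
Qed.

Lemma L1_eq0 (x u : P) : le3 x u -> L1 x u = 0 -> x = u.
Proof.
case: x => [[x1 x2] x3]; case: u => [[u1 u2] u3].
rewrite /le3 /L1 /absd /= => /and3P[h1 h2 h3] h.
have e1 : x1 = u1 by apply: ord_inj; lia.
have e2 : x2 = u2 by apply: ord_inj; lia.
have e3 : x3 = u3 by apply: ord_inj; lia.
by rewrite e1 e2 e3.
Qed.

Lemma walk o (p u : P) : le3 p u -> (forall x, le3 p x -> le3 x u -> valid (o, x)) ->
  reach A (L1 p u) (o, p) (o, u).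
Proof.
case: p => [[p1 p2] p3]; case: u => [[u1 u2] u3] pu hv.
suff H : forall n x, le3 ((p1, p2), p3) x -> le3 x ((u1, u2), u3) ->
   L1 x ((u1, u2), u3) = n -> reach A n (o, x) (o, ((u1, u2), u3)).
  by apply: H; rewrite ?le3_refl.
elim=> [|n IH] x px xu.
  move=> hL; suff -> : x = ((u1, u2), u3) by rewrite /= eqxx.
  exact: L1_eq0 xu hL.
move=> hL.
have hx := hv x px xu.
move: px xu hL hx; case: x => [[x1 x2] x3] px xu hL hx.
move: (px) (xu) => /and3P[/= q1 q2 q3] /and3P[/= r1 r2 r3].
move: (hL); rewrite /L1 /absd /= => hL'.
case: (ltnP x1 u1) => h1.
  have hw : x1.+1 < k1.+1 by have := ltn_ord u1; lia.
  have pw : le3 ((p1, p2), p3) ((Ordinal hw, x2), x3) by apply/and3P; split => //=; lia.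
  have wu : le3 ((Ordinal hw, x2), x3) ((u1, u2), u3) by apply/and3P; split => //=; lia.
  apply: (reach_step (z := (o, ((Ordinal hw, x2), x3)))).
    by apply: step_adj => //; [exact: hv | rewrite /grid_adj /diff1 /= !eqxx ?orbT].
  apply: IH => //; rewrite /L1 /absd /=; lia.
case: (ltnP x2 u2) => h2.
  have hw : x2.+1 < k2.+1 by have := ltn_ord u2; lia.
  have pw : le3 ((p1, p2), p3) ((x1, Ordinal hw), x3) by apply/and3P; split => //=; lia.
  have wu : le3 ((x1, Ordinal hw), x3) ((u1, u2), u3) by apply/and3P; split => //=; lia.
  apply: (reach_step (z := (o, ((x1, Ordinal hw), x3)))).
    by apply: step_adj => //; [exact: hv | rewrite /grid_adj /diff1 /= !eqxx ?orbT].
  apply: IH => //; rewrite /L1 /absd /=; lia.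
case: (ltnP x3 u3) => h3; last by lia.
  have hw : x3.+1 < k3.+1 by have := ltn_ord u3; lia.
  have pw : le3 ((p1, p2), p3) ((x1, x2), Ordinal hw) by apply/and3P; split => //=; lia.
  have wu : le3 ((x1, x2), Ordinal hw) ((u1, u2), u3) by apply/and3P; split => //=; lia.
  apply: (reach_step (z := (o, ((x1, x2), Ordinal hw)))).
    by apply: step_adj => //; [exact: hv | rewrite /grid_adj /diff1 /= !eqxx ?orbT].
  apply: IH => //; rewrite /L1 /absd /=; lia.
Qed.


Lemma cardV : #|V| = m.+1 * (k1.+1 * k2.+1 * k3.+1).
Proof. by rewrite /tvert /gpoint !card_prod card_option !card_ord. Qed.

Lemma L1_bound (p u : P) : L1 p u <= k1 + k2 + k3.
Proof.
case: p => [[p1 p2] p3]; case: u => [[u1 u2] u3]; rewrite /L1 /absd /=.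
have := ltn_ord p1; have := ltn_ord p2; have := ltn_ord p3.
have := ltn_ord u1; have := ltn_ord u2; have := ltn_ord u3; lia.
Qed.

Lemma nbound n p u : 0 < m -> n <= L1 p u + 2 -> n <= #|V|.
Proof.
move=> hm hn; rewrite cardV; have := L1_bound p u.
have h : k1 + k2 + k3 + 1 <= k1.+1 * k2.+1 * k3.+1 by nia.
nia.
Qed.

Definition lipg (g : option 'I_m -> nat) :=
  forall s, g None <= g (Some s) + 1 /\ g (Some s) <= g None + 1.

Lemma dist_val o1 o2 p u n g : reach A n (o1, p) (o2, u) -> 0 < m ->
  n <= L1 p u + 2 -> lipg g -> g o1 = 0 -> n = L1 p u + g o2 ->
  Defs.dist A (o1, p) (o2, u) = n.
Proof.
move=> hr hm hn hg g0 hn'; apply: dist_exact => //; first exact: nbound hn.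
move=> k hk.
have := reach_pot (phi := fun v : V => L1 p v.2 + g v.1) (pot_lip p hg) hk.
by rewrite /= L1_refl g0 hn'.
Qed.

Lemma validN x : valid (None, x).
Proof. by []. Qed.

Lemma walkN p u : le3 p u -> reach A (L1 p u) (None, p) (None, u).
Proof. by move=> h; apply: walk. Qed.

Lemma walkS i p u : le3 p u -> inb i p -> inb i u -> reach A (L1 p u) (Some i, p) (Some i, u).
Proof. by move=> h hp hu; apply: walk => // x h1 h2; apply: box_conv hp hu h1 h2. Qed.

Lemma dNN p u : 0 < m -> le3 p u -> Defs.dist A (None, p) (None, u) = L1 p u.
Proof.
move=> hm h; apply: (dist_val (g := fun _ => 0)) => //.
- exact: walkN.
- lia.
- by rewrite addn0.
Qed.

Lemma dSS i p u : le3 p u -> inb i p -> inb i u ->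
  Defs.dist A (Some i, p) (Some i, u) = L1 p u.
Proof.
move=> h hp hu; apply: (dist_val (g := fun _ => 0)) => //.
- exact: walkS.
- exact: leq_ltn_trans (ltn_ord i).
- lia.
- by rewrite addn0.
Qed.

Lemma dNS i p u : le3 p u -> inb i u -> Defs.dist A (None, p) (Some i, u) = L1 p u + 1.
Proof.
move=> h hu; apply: (dist_val (g := fun o => if o is Some _ then 1 else 0)) => //.
- exact: reach_trans (walkN h) (reach1 (vert_adj hu)).
- exact: leq_ltn_trans (ltn_ord i).
- lia.
Qed.

Lemma dSN i p u : le3 p u -> inb i p -> Defs.dist A (Some i, p) (None, u) = L1 p u + 1.
Proof.
move=> h hp; apply: (dist_val (g := fun o => if o == Some i then 0 else 1)) => //.
- rewrite addnC; apply: reach_trans (reach1 _) (walkN h).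
  by rewrite A_sym; apply: vert_adj.
- exact: leq_ltn_trans (ltn_ord i).
- lia.
- by move=> s /=; case: (_ == _).
- by rewrite eqxx.
Qed.

Lemma dSSd i j p u : i != j -> le3 p u -> inb i p -> inb j u ->
  Defs.dist A (Some i, p) (Some j, u) = L1 p u + 2.
Proof.
move=> ij h hp hu.
apply: (dist_val (g := fun o => if o is Some s then (if s == i then 0 else 2) else 1)) => //.
- have e : L1 p u + 2 = 1 + L1 p u + 1 by lia.
  rewrite e; apply: reach_trans (reach_trans (reach1 _) (walkN h)) (reach1 (vert_adj hu)).
  by rewrite A_sym; apply: vert_adj.
- exact: leq_ltn_trans (ltn_ord i).
- by move=> s /=; case: (_ == _).
- by rewrite eqxx.
- by rewrite eq_sym (negbTE ij).
Qed.


Definition pc (i : 'I_m) : P := ((inord (a1 i), inord (b1 i)), inord (c1 i)).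

Lemma pc_box i : inb i (pc i).
Proof.
have := ha i; have := hb i; have := hc i.
move=> /andP[? ?] /andP[? ?] /andP[? ?].
rewrite /in_box /pc /= !inordK; [|lia|lia|lia].
apply/and3P; split; apply/andP; split; lia.
Qed.

Lemma pc_le i u : inb i u -> le3 (pc i) u.
Proof.
have := ha i; have := hb i; have := hc i.
case: u => [[u1 u2] u3].
move=> /andP[? ?] /andP[? ?] /andP[? ?]; rewrite /in_box /=.
move=> /and3P[/andP[? ?] /andP[? ?] /andP[? ?]].
rewrite /le3 /pc /= !inordK; [|lia|lia|lia].
apply/and3P; split; lia.
Qed.

Definition ee (i : 'I_m) : V * V := ((None, pc i), (Some i, pc i)).
Definition CC (i : 'I_m) := theta_class A (ee i).

Lemma ee_edge i : ee i \in edges A.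
Proof. by rewrite inE /ee /=; apply: vert_adj; apply: pc_box. Qed.

Lemma inC i u : inb i u -> ((None, u), (Some i, u)) \in CC i.
Proof.
move=> hu; rewrite /CC /theta_class inE /= inE vert_adj //= /theta /=.
have hm : 0 < m by exact: leq_ltn_trans (ltn_ord i).
have hl := pc_le hu.
rewrite dNN // (dSS hl (pc_box i) hu) (dNS hl hu) (dSN hl (pc_box i)).
apply/eqP; lia.
Qed.

Lemma notinC i j u : i != j -> inb i u -> inb j u -> ((None, u), (Some j, u)) \notin CC i.
Proof.
move=> ij hi hj; rewrite /CC /theta_class inE /= negb_and; apply/orP; right.
have hm : 0 < m by exact: leq_ltn_trans (ltn_ord i).
have hl := pc_le hi.
rewrite /theta /= negbK dNN // (dSSd ij hl (pc_box i) hj) (dNS hl hj) (dSN hl (pc_box i)).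
apply/eqP; lia.
Qed.

Definition orig : P := ((ord0, ord0), ord0).

Lemma orig_le u : le3 orig u.
Proof. by rewrite /le3 /orig /=. Qed.

Lemma dalphaN u : 0 < m -> Defs.dist A (None, u) (talpha k1 k2 k3 m) = L1 orig u.
Proof. move=> hm; rewrite dist_sym; [exact: dNN (orig_le u) | exact: A_sym]. Qed.

Lemma dalphaS i u : inb i u -> Defs.dist A (Some i, u) (talpha k1 k2 k3 m) = L1 orig u + 1.
Proof. move=> hu; rewrite dist_sym; [exact: dNS (orig_le u) hu | exact: A_sym]. Qed.

Lemma adjS_char i u w : A (Some i, u) w -> w.1 = Some i \/ w = (None, u).
Proof.
case: w => [o w]; rewrite /tadj /= => /and3P[_ _ /orP[/andP[/eqP<- _]|/andP[/eqP<-]]].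
  by left.
by case: o => //= _; right.
Qed.

Lemma osc i j u : i != j -> inb i u -> inb j u ->
  osculate_at A (talpha k1 k2 k3 m) (CC i) (CC j).
Proof.
move=> ij hi hj; have hm : 0 < m by exact: leq_ltn_trans (ltn_ord i).
apply/existsP; exists (None, u); apply/existsP; exists (Some i, u); apply/existsP; exists (Some j, u).
have yz : (Some i, u) != (Some j, u) :> V by apply: contra ij => /eqP [->].
rewrite inC // inC // /= dalphaN // !dalphaS // addn1 ltnSn /= andbT.
apply/negP => /(cc4 yz) [w /and3P[wx /orP h1 /orP h2]].
have {}h1 : A (Some i, u) w by case: h1 => //; rewrite A_sym.
have {}h2 : A (Some j, u) w by case: h2 => //; rewrite A_sym.
case: (adjS_char h1) => e1; last by rewrite e1 eqxx in wx.
case: (adjS_char h2) => e2; last by rewrite e2 eqxx in wx.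
by move: ij; rewrite e1 in e2; case: e2 => ->; rewrite eqxx.
Qed.

Lemma meet_pt i j : boxes_meet a1 a2 b1 b2 c1 c2 i j -> exists u, inb i u /\ inb j u.
Proof.
move=> [x [y [z [[hx1 hx2] [[hx3 hx4] [[hy1 hy2] [[hy3 hy4] [[hz1 hz2] [hz3 hz4]]]]]]]]].
have l1 : a1 i <= a2 j by apply/leP; apply: INR_le; apply: Rle_trans hx1 hx4.
have l2 : a1 j <= a2 i by apply/leP; apply: INR_le; apply: Rle_trans hx3 hx2.
have l3 : b1 i <= b2 j by apply/leP; apply: INR_le; apply: Rle_trans hy1 hy4.
have l4 : b1 j <= b2 i by apply/leP; apply: INR_le; apply: Rle_trans hy3 hy2.
have l5 : c1 i <= c2 j by apply/leP; apply: INR_le; apply: Rle_trans hz1 hz4.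
have l6 : c1 j <= c2 i by apply/leP; apply: INR_le; apply: Rle_trans hz3 hz2.
have := ha i; have := hb i; have := hc i; have := ha j; have := hb j; have := hc j.
move=> /andP[? ?] /andP[? ?] /andP[? ?] /andP[? ?] /andP[? ?] /andP[? ?].
exists ((inord (maxn (a1 i) (a1 j)), inord (maxn (b1 i) (b1 j))), inord (maxn (c1 i) (c1 j))).
rewrite /in_box /= !inordK; [|lia|lia|lia].
split; apply/and3P; split; apply/andP; split; lia.
Qed.


Lemma part2 : chi [set: 'I_m] (box_adj a1 a2 b1 b2 c1 c2) <=
  chi (theta_classes A) (pcontact_adj A (talpha k1 k2 k3 m)).
Proof.
set S := theta_classes A; set k := chi S _.
case: (leqP (#|'I_m|.+1) k) => hk.
  by apply: chi_le; apply: colorable_big (chi_col _ _) hk.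
have [f /andP[/forallP hf1 /forallP hf2]] := existsP (chi_col S (pcontact_adj A (talpha k1 k2 k3 m))).
have CS i : CC i \in S by apply: imset_f; exact: ee_edge.
have fk i : f (CC i) < k by have := hf1 (CC i); rewrite CS.
apply: chi_le; apply/existsP; exists [ffun i => inord (f (CC i))].
apply/andP; split.
  apply/forallP=> i; apply/implyP=> _; rewrite ffunE inordK ?fk //.
  exact: ltn_trans (fk i) hk.
apply/forallP=> i; apply/implyP=> _; apply/forallP=> j; apply/implyP=> _.
apply/implyP=> /andP[ij]; rewrite /box_adj; case: excluded_middle_informative => // hmeet _.
have [u [hi hj]] := meet_pt hmeet.
have hneq : f (CC i) != f (CC j).
  have := hf2 (CC i); rewrite CS => /forallP /(_ (CC j)); rewrite CS /= => H.
  apply: (implyP H); apply/andP; split.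
    apply/negP => /eqP E; have := inC hj; rewrite -E.
    by move/negP: (notinC ij hi hj).
  by rewrite /pcontact_adj; apply/orP; right; apply: osc ij hi hj.
rewrite !ffunE; apply: contra hneq => /eqP /(congr1 val) /=.
rewrite !inordK; first by move=> E; apply/eqP; apply: ord_inj.
  exact: ltn_trans (fk j) hk.
exact: ltn_trans (fk i) hk.
Qed.

End Spec.

Lemma part1 (T : finType) (adj : rel T) (alpha : T) :
  chi (theta_classes adj) (pcontact_adj adj alpha) <= chi (theta_classes adj) (contact_adj adj).
Proof.
apply: chi_le; apply: colorable_mono (chi_col _ _) => x y; rewrite /pcontact_adj /contact_adj => /orP[->//|h].
apply/orP; right; move: h.
move=> /existsP[x0 /existsP[y0 /existsP[z0 /and5P[h1 h2 h3 _ _]]]].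
by apply/existsP; exists x0; apply/existsP; exists y0; apply/existsP; exists z0; rewrite h1 h2 h3.
Qed.

Theorem lemma5 (k1 k2 k3 m : nat) (a1 a2 b1 b2 c1 c2 : 'I_m -> nat) :
  0 < k1 -> 0 < k2 -> 0 < k3 ->
  (forall i, a1 i < a2 i <= k1) ->
  (forall i, b1 i < b2 i <= k2) ->
  (forall i, c1 i < c2 i <= k3) ->
  let adjT := tadj (k1 := k1) (k2 := k2) (k3 := k3) a1 a2 b1 b2 c1 c2 in
  let alpha := talpha k1 k2 k3 m in
  chi (theta_classes adjT) (contact_adj adjT)
    >= chi (theta_classes adjT) (pcontact_adj adjT alpha)
  /\ chi (theta_classes adjT) (pcontact_adj adjT alpha)
    >= chi [set: 'I_m] (box_adj a1 a2 b1 b2 c1 c2).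
Proof.
move=> _ _ _ ha hb hc adjT alpha; split; first exact: part1.
exact: part2 ha hb hc.
Qed.
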